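(* For integers $k\ge1$ and $1\le j\le 2k-1$ put \[ a_{jk}=\sum_{i=\max(k-j,0)}^{k-1}\Big(-\frac12\Big)^i(j)_{k-i}\frac{(k-1+i)!}{(k-1-i)!\,i!}, \] with $(n)_r=n(n-1)\cdots(n-r+1)$, $(n)_0=1$. Then $a_{2k-1,k}=\dfrac{(2k-1)!}{2^{k-1}(k-1)!}\neq0$, and $a_{jk}=0$ for every even $j$ with $2\le j\le 2k-2$. *)

(* Defs.v *)
From HB Require Import structures.
From mathcomp Require Import all_boot all_order all_algebra.
Set Implicit Arguments. Unset Strict Implicit. Unset Printing Implicit Defensive.
Import Order.TTheory GRing.Theory Num.Theory.
Local Open Scope ring_scope.

Definition a (j k : nat) : rat :=
  \sum_(maxn (k - j) 0 <= i < k)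
     (- (1 / 2)) ^+ i * ((j ^_ (k - i))%N)%:R
       * (((k - 1 + i)`!)%N)%:R / ((((k - 1 - i)`!)%N)%:R * ((i`!)%N)%:R).

(* Main.v *)
Require Import Defs.
From HB Require Import structures.
From mathcomp Require Import all_boot all_order all_algebra.
Import Order.TTheory GRing.Theory Num.Theory.
Local Open Scope ring_scope.
From Stdlib Require Import Ring ArithRing Lia.
Set Implicit Arguments. Unset Strict Implicit. Unset Printing Implicit Defensive.
Local Close Scope ring_scope.
Ltac nring := rewrite -?plusE -?multE; match goal with |- @eq _ ?a ?b => change (@eq nat a b) end; ring.

Definition N r i := 'C(r + i, i) * r ^_ i.

Lemma NE r i : i <= r -> N r i * ((r - i)`! * i`!) = (r + i)`!.
Proof.
move=> hi; rewrite /N.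
have h1 := ffact_fact hi. have h2 := bin_fact (leq_addl r i).
rewrite addnK in h2.
rewrite -h2 -h1. rewrite -!multE. ring.
Qed.

Lemma N0 r : N r 0 = 1.
Proof. by rewrite /N addn0 bin0 ffactn0. Qed.

Lemma Nrec r i : i < r -> N r.+1 i.+1 = N r i.+1 + 2 * (r.+1 + i) * N r i.
Proof.
move=> hi.
have [d ->] : exists d, r = i + d.+1 by exists (r - i.+1); rewrite addnS -addSn subnKC.
set M := (d.+1)`! * (i.+1)`!.
apply/eqP; rewrite -(eqn_pmul2r (_ : 0 < M)); last by rewrite muln_gt0 !fact_gt0.
apply/eqP.
have e1' : N (i + d.+1).+1 i.+1 * M = ((i + d.+1).+1 + i.+1)`!.
  rewrite -(NE (_ : i.+1 <= (i + d.+1).+1)); last by rewrite ltnS leq_addr.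
  rewrite ?/M; congr (_ * (factorial _ * _)); rewrite -?minusE -?plusE; lia.
have e2 : N (i + d.+1) i.+1 * (d`! * (i.+1)`!) = (i + d.+1 + i.+1)`!.
  rewrite -NE; last by rewrite addnS ltnS leq_addr.
  rewrite ?/M; congr (_ * (factorial _ * _)); rewrite -?minusE -?plusE; lia.
have e3 : N (i + d.+1) i * ((d.+1)`! * i`!) = (i + d.+1 + i)`!.
  rewrite -NE; last by rewrite leq_addr.
  rewrite ?/M; congr (_ * (factorial _ * _)); rewrite -?minusE -?plusE; lia.
rewrite e1' mulnDl.
have -> : N (i + d.+1) i.+1 * M = (i + d.+1 + i.+1)`! * d.+1.
  by rewrite -e2 /M factS; nring.
have -> : 2 * ((i + d.+1).+1 + i) * N (i + d.+1) i * M = 2 * ((i + d.+1).+1 + i) * ((i + d.+1 + i)`! * i.+1).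
  by rewrite -e3 /M (factS i); nring.
rewrite !addnS !addSn !factS.
nring.
Qed.

Lemma Nlast r : N r.+1 r.+1 = 2 * (2 * r + 1) * N r r.
Proof.
apply/eqP; rewrite -(eqn_pmul2r (_ : 0 < (0`! * (r.+1)`!))); last by rewrite muln_gt0 !fact_gt0.
apply/eqP.
have e1 := NE (leqnn r.+1). rewrite subnn in e1. rewrite e1.
have e2 := NE (leqnn r). rewrite subnn in e2.
have -> : 2 * (2 * r + 1) * N r r * (0`! * (r.+1)`!) = 2 * (2 * r + 1) * (N r r * (0`! * r`!)) * r.+1.
  rewrite (factS r); nring.
rewrite e2 !addnS !addSn !factS.
nring.
Qed.

Lemma oddprod r : \prod_(0 <= t < r.+1) (2 * r + 1 - 2 * t) * (2 ^ r * r`!) = (2 * r + 1)`!.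
Proof.
rewrite big_nat_rev /= add0n.
rewrite (eq_big_nat _ _ (F2 := fun i => 2 * i + 1)); last first.
  move=> i /andP [_ hi]. move/ssrnat.ltP: hi => hi. rewrite -?minusE -?plusE -?multE; lia.
elim: r => [|r IH]; first by rewrite big_nat1.
rewrite big_nat_recr //= expnS factS.
have -> : \prod_(0 <= i < r.+1) (2 * i + 1) * (2 * r.+1 + 1) * (2 * 2 ^ r * (r.+1 * r`!))
   = (\prod_(0 <= i < r.+1) (2 * i + 1) * (2 ^ r * r`!)) * ((2 * r.+1 + 1) * 2 * r.+1).
  nring.
rewrite IH.
have -> : 2 * r.+1 + 1 = (2 * r + 1).+2 by rewrite mulnS addSn addSn.
rewrite !factS. rewrite -!plusE -!multE. ring.
Qed.
Local Open Scope ring_scope.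
Lemma ffS (x m : nat) : ((x ^_ m.+1)%N)%:R = ((x ^_ m)%N)%:R * (x%:R - m%:R) :> rat.
Proof.
rewrite ffactnSr natrM.
have [h|h] := leqP m x; first by rewrite natrB.
by rewrite ffact_small // !mul0r.
Qed.

Lemma alg2 (p B m f : rat) : -(1/2) * p * (2%:R * m * B) * f = - (p * B * m * f).
Proof.
rewrite !mulrA !mulNr; congr (- _).
rewrite [1/2 * p * 2%:R]mulrAC div1r mulVf ?mul1r ?pnatr_eq0 //.
by rewrite [p * m * B]mulrAC.
Qed.

Lemma alg1 (p A B m f : rat) :
  -(1/2) * p * (A + 2%:R * m * B) * f = -(1/2) * p * A * f - p * B * m * f.
Proof. by rewrite mulrDr mulrDl alg2. Qed.

Definition F r x : rat :=
  \sum_(0 <= i < r.+1) (-(1/2)) ^+ i * (N r i)%:R * ((x ^_ (r.+1 - i))%N)%:R.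

Lemma Fprod r x : F r x = \prod_(0 <= t < r.+1) (x%:R - (2 * t)%:R).
Proof.
elim: r => [|r IH].
  by rewrite /F !big_nat1 N0 expr0 !mul1r ffactn1 muln0 subr0.
rewrite big_nat_recr //= -IH.
pose c := fun i : nat => ((-(1/2)) ^+ i * (N r.+1 i)%:R * ((x ^_ (r.+2 - i))%N)%:R : rat).
pose d := fun i : nat => ((-(1/2)) ^+ i * (N r i)%:R * ((x ^_ (r.+2 - i))%N)%:R : rat).
pose e := fun i : nat => ((-(1/2)) ^+ i * (N r i)%:R * (r.+1 + i)%:R * ((x ^_ (r.+1 - i))%N)%:R : rat).
have -> : F r.+1 x = c 0%N + (\sum_(0 <= i < r) c i.+1 + c r.+1) by
  rewrite /F big_nat_recl // big_nat_recr.
have -> : F r x * (x%:R - (2 * r.+1)%:R) = (d 0%N + \sum_(0 <= i < r) d i.+1) - (\sum_(0 <= i < r) e i + e r).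
  suff -> : F r x * (x%:R - (2 * r.+1)%:R) = \sum_(0 <= i < r.+1) (d i - e i).
    by rewrite sumrB big_nat_recl // big_nat_recr.
  rewrite /F big_distrl /=.
  apply: eq_big_nat => i /andP [_ hi].
  rewrite /d /e.
  have -> : (r.+2 - i)%N = (r.+1 - i).+1 by rewrite subSn // ltnW.
  rewrite ffS.
  have -> : (2 * r.+1)%N = ((r.+1 - i) + (r.+1 + i))%N.
    by move/ssrnat.ltP: hi => hi; rewrite -?minusE -?plusE -?multE; lia.
  rewrite natrD opprD addrA mulrDr mulrN.
  by rewrite !mulrA [_ * (r.+1 + i)%:R * _]mulrAC.
have -> : c 0%N = d 0%N by rewrite /c /d !N0.
have -> : \sum_(0 <= i < r) c i.+1 = \sum_(0 <= i < r) d i.+1 - \sum_(0 <= i < r) e i.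
  rewrite -sumrB; apply: eq_big_nat => i /andP [_ hi].
  rewrite /c /d /e Nrec // natrD !natrM exprS subSS.
  by rewrite alg1 !mulrA.
have -> : c r.+1 = - e r.
  rewrite /c /e Nlast !natrM exprS subSS.
  have -> : (r.+1 + r)%N = (2 * r + 1)%N by rewrite addn1 mul2n -addnn addSn.
  by rewrite alg2 !mulrA.
by rewrite opprD !addrA.
Qed.

Lemma aF (j r : nat) : a j r.+1 = F r j.
Proof.
rewrite /a /F maxn0 !subn1 /=.
rewrite [RHS](big_cat_nat (leq0n (r.+1 - j)) (leq_subr j r.+1)) /=.
rewrite [X in _ = X + _]big_nat_cond [X in _ = X + _]big1 ?add0r; last first.
  move=> i /andP [/andP [_ hi] _].
  rewrite ffact_small ?mulr0 ?mul0r //.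
  by move/ssrnat.ltP: hi => hi; apply/ssrnat.ltP; rewrite -?minusE in hi *; lia.
apply: eq_big_nat => i /andP [_ hi].
rewrite ltnS in hi.
rewrite -(NE hi) !natrM mulrA mulfK; last first.
  by rewrite mulf_neq0 // pnatr_eq0 -lt0n fact_gt0.
by rewrite mulrAC.
Qed.

Theorem mainTheorem11 (k : nat) (hk : (1 <= k)%N) :
  a (2 * k - 1) k = (((2 * k - 1)`!)%N)%:R / ((2 ^ (k - 1))%N%:R * (((k - 1)`!)%N)%:R)
  /\ a (2 * k - 1) k != 0
  /\ (forall j : nat, (2 <= j <= 2 * k - 2)%N -> ~~ odd j -> a j k = 0).
Proof.
case: k hk => [//|r] _.
have h21 : (2 * r.+1 - 1)%N = (2 * r + 1)%N.
  by rewrite -?minusE -?plusE -?multE; lia.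
have E : a (2 * r.+1 - 1) r.+1 = (((2 * r.+1 - 1)`!)%N)%:R / ((2 ^ (r.+1 - 1))%N%:R * (((r.+1 - 1)`!)%N)%:R).
  rewrite aF Fprod h21 subn1 /=.
  rewrite (eq_big_nat _ _ (F2 := fun t => ((2 * r + 1 - 2 * t)%N)%:R)); last first.
    move=> t /andP [_ ht]; rewrite natrB //.
    by move/ssrnat.ltP: ht => ht; apply/ssrnat.leP; rewrite -?plusE -?multE; lia.
  rewrite -natr_prod -(oddprod r) natrM [(2 ^ r * _)%:R]natrM mulfK //.
  by rewrite mulf_neq0 // pnatr_eq0 -lt0n ?fact_gt0 ?expn_gt0.
split; first exact: E.
split.
  rewrite E mulf_neq0 // ?invr_eq0 ?mulf_neq0 // pnatr_eq0 -lt0n ?fact_gt0 ?expn_gt0 //.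
move=> j hj hodd.
have hj2 : j = (2 * j./2)%N.
  by rewrite -[LHS]odd_double_half (negbTE hodd) add0n -mul2n.
set s := j./2 in hj2.
have [hs1 hs2] : (1 <= s /\ s <= r)%N.
  move: hj; rewrite hj2 => /andP [h1 h2].
  move/ssrnat.leP: h1 => h1; move/ssrnat.leP: h2 => h2.
  by split; apply/ssrnat.leP; rewrite -?minusE -?multE in h1 h2 *; lia.
rewrite aF Fprod hj2.
rewrite (big_cat_nat (leq0n s) (_ : s <= r.+1)%N) /=; last by rewrite ltnW.
by rewrite [X in _ * X]big_ltn ?ltnS // subrr mul0r mulr0.
Qed.
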